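(* Fix $\lambda\ge 0$, an angular frequency $\omega>0$, an integer $n\ge 1$, layer thicknesses $d_1,\dots,d_{n-1}>0$, magnetic permeabilities $\mu_1,\dots,\mu_n>0$ and electrical conductivities $\sigma_1,\dots,\sigma_n>0$. For $k=1,\dots,n$ let $u_k=\sqrt{\lambda^2+\mathrm{i}\sigma_k\mu_k\omega}$ and $N_k=\dfrac{u_k}{\mathrm{i}\mu_k\omega}$, and define the surface admittances by $Y_n=N_n$ and, for $k=n-1,\dots,1$, $$Y_k=N_k\,\frac{Y_{k+1}+N_k\tanh(d_ku_k)}{N_k+Y_{k+1}\tanh(d_ku_k)},$$ regarded as functions of $\boldsymbol\sigma=(\sigma_1,\dots,\sigma_n)$. For $k=1,\dots,n-1$ set $$a_k=\frac{Y_{k+1}+N_k\tanh(d_ku_k)}{N_k+Y_{k+1}\tanh(d_ku_k)},\qquad b_k=\frac{1}{[N_k+Y_{k+1}\tanh(d_ku_k)]^2\cosh^2(d_ku_k)}.$$ Then the partial derivatives $Y'_{kj}=\partial Y_k/\partial\sigma_j$, $k,j=1,\dots,n$, satisfy $$Y'_{nn}=\frac{1}{2u_n},\qquad Y'_{nj}=0\ \ (j=1,\dots,n-1),$$ and, for $k=n-1,n-2,\dots,1$, $$Y'_{kj}=N_k^2\,b_k\,Y'_{k+1,j}\quad (j=n,n-1,\dots,k+1),$$ $$Y'_{kk}=\frac{a_k}{2u_k}+\frac{b_k}{2}\Big[N_k^2d_k-Y_{k+1}\Big(d_kY_{k+1}+\frac{1}{\mathrm{i}\mu_k\omega}\Big)\Big],$$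 $$Y'_{kj}=0\quad (j=k-1,k-2,\dots,1).$$
   Context: This models a layered soil with $n$ horizontal layers, the $k$-th having thickness $d_k$ (the bottom layer $n$ is infinitely thick), conductivity $\sigma_k$ and permeability $\mu_k$; $\mathrm{i}=\sqrt{-1}$ and the square root is the principal branch. $N_k$ is called the characteristic admittance and $Y_k$ the surface admittance at the top of layer $k$. All quantities depend on the auxiliary variable $\lambda$, suppressed from notation, and the derivatives are taken with respect to the conductivities with $\lambda,\omega,d_k,\mu_k$ fixed (assuming the denominators appearing are nonzero). *)

(* Defs.v *)
From Stdlib Require Import Reals.
From Coquelicot Require Import Coquelicot.
Open Scope R_scope.

Notation CC := Complex.C.

Definition cexp (z : CC) : CC :=
  (exp (Re z) * cos (Im z), exp (Re z) * sin (Im z)).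
Definition ccosh (z : CC) : CC := ((cexp z + cexp (- z)) / 2)%C.
Definition csinh (z : CC) : CC := ((cexp z - cexp (- z)) / 2)%C.
Definition ctanh (z : CC) : CC := (csinh z / ccosh z)%C.

(* principal square root: Re >= 0, and Im >= 0 on the negative real axis *)
Definition csqrt (z : CC) : CC :=
  let r := Cmod z in
  let x := sqrt ((r + Re z) / 2) in
  let y := sqrt ((r - Re z) / 2) in
  if Rlt_dec (Im z) 0 then (x, - y) else (x, y).

Definition Ci : CC := (0, 1).

(* Layer data: thicknesses d k, permeabilities mu k, conductivities sigma k,
   indexed by k = 1..n (values outside 1..n are irrelevant). *)
Definition u_ (lam omega : R) (mu sigma : nat -> R) (k : nat) : CC :=
  csqrt (RtoC (lam ^ 2) + Ci * RtoC (sigma k * mu k * omega))%C.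

Definition N_ (lam omega : R) (mu sigma : nat -> R) (k : nat) : CC :=
  (u_ lam omega mu sigma k / (Ci * RtoC (mu k * omega)))%C.

Definition Ystep (lam omega : R) (d mu sigma : nat -> R) (k : nat) (Y1 : CC) : CC :=
  let Nk := N_ lam omega mu sigma k in
  let t := ctanh (RtoC (d k) * u_ lam omega mu sigma k)%C in
  (Nk * ((Y1 + Nk * t) / (Nk + Y1 * t)))%C.

(* Yr i = Y_{n-i} *)
Fixpoint Yr (lam omega : R) (n : nat) (d mu sigma : nat -> R) (i : nat) : CC :=
  match i with
  | O => N_ lam omega mu sigma n
  | S i' => Ystep lam omega d mu sigma (n - S i') (Yr lam omega n d mu sigma i')
  end.

Definition Y_ (lam omega : R) (n : nat) (d mu sigma : nat -> R) (k : nat) : CC :=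
  Yr lam omega n d mu sigma (n - k).

Definition a_ (lam omega : R) (n : nat) (d mu sigma : nat -> R) (k : nat) : CC :=
  let Nk := N_ lam omega mu sigma k in
  let Y1 := Y_ lam omega n d mu sigma (S k) in
  let t := ctanh (RtoC (d k) * u_ lam omega mu sigma k)%C in
  ((Y1 + Nk * t) / (Nk + Y1 * t))%C.

Definition b_ (lam omega : R) (n : nat) (d mu sigma : nat -> R) (k : nat) : CC :=
  let Nk := N_ lam omega mu sigma k in
  let Y1 := Y_ lam omega n d mu sigma (S k) in
  let z := (RtoC (d k) * u_ lam omega mu sigma k)%C in
  (/ ((Nk + Y1 * ctanh z) ^ 2 * (ccosh z) ^ 2))%C.

Definition upd (sigma : nat -> R) (j : nat) (t : R) : nat -> R :=
  fun i => if Nat.eqb i j then t else sigma i.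

(* Main.v *)
Require Import Defs.
From Stdlib Require Import Reals Lra Lia FunctionalExtensionality.
From Coquelicot Require Import Coquelicot.
Open Scope R_scope.


Definition CD (f : R -> C) (x : R) (l : C) :=
  is_derive (K:=R_AbsRing) (V:=C_R_NormedModule) f x l.

Lemma CD_intro f x l :
  is_derive (fun t => fst (f t)) x (fst l) ->
  is_derive (fun t => snd (f t)) x (snd l) -> CD f x l.
Proof.
  intros H1 H2. unfold CD, is_derive in *.
  apply filterdiff_ext with (fun t => (fst (f t), snd (f t))).
  { intros y; destruct (f y); reflexivity. }
  apply filterdiff_ext_lin with (fun y => (scal y (fst l), scal y (snd l))).
  - apply (filterdiff_comp'_2 (U:=R_NormedModule) (V:=R_NormedModule)
      (W:=prod_NormedModule R_AbsRing R_NormedModule R_NormedModule)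
      (fun t => fst (f t)) (fun t => snd (f t)) (fun a b => (a,b)) x _ _ (fun a b => (a,b))); auto.
    apply filterdiff_ext with (fun t => t).
    { intros [a b]; reflexivity. }
    apply filterdiff_ext_lin with (fun t => t).
    + apply filterdiff_id.
    + intros [a b]; reflexivity.
  - intros y; destruct l; reflexivity.
Qed.

Lemma CD_fst f x l : CD f x l -> is_derive (fun t => fst (f t)) x (fst l).
Proof.
  intros H. unfold CD, is_derive in *.
  apply filterdiff_ext_lin with (fun y => fst (scal (V:=C_R_NormedModule) y l)).
  - apply (filterdiff_comp' (V:=C_R_NormedModule) f (fun p : C_R_NormedModule => fst p) x); auto.
    apply filterdiff_linear. apply (is_linear_fst (U:=R_NormedModule) (V:=R_NormedModule)).
  - intros y; destruct l; reflexivity.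
Qed.

Lemma CD_snd f x l : CD f x l -> is_derive (fun t => snd (f t)) x (snd l).
Proof.
  intros H. unfold CD, is_derive in *.
  apply filterdiff_ext_lin with (fun y => snd (scal (V:=C_R_NormedModule) y l)).
  - apply (filterdiff_comp' (V:=C_R_NormedModule) f (fun p : C_R_NormedModule => snd p) x); auto.
    apply filterdiff_linear. apply (is_linear_snd (U:=R_NormedModule) (V:=R_NormedModule)).
  - intros y; destruct l; reflexivity.
Qed.



Lemma isd_eq (f : R -> R) x l l' : is_derive f x l -> l = l' -> is_derive f x l'.
Proof. intros H ->; exact H. Qed.
Lemma Rd_mult (f g : R -> R) x a b : is_derive f x a -> is_derive g x b ->
  is_derive (fun t => f t * g t) x (a * g x + f x * b).
Proof. intros. apply (is_derive_mult f g x a b); auto. intros; apply Rmult_comm. Qed.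
Lemma Rd_plus (f g : R -> R) x a b : is_derive f x a -> is_derive g x b ->
  is_derive (fun t => f t + g t) x (a + b).
Proof. intros. apply (is_derive_plus f g x a b); auto. Qed.
Lemma Rd_minus (f g : R -> R) x a b : is_derive f x a -> is_derive g x b ->
  is_derive (fun t => f t - g t) x (a - b).
Proof. intros. apply (is_derive_minus f g x a b); auto. Qed.
Lemma Rd_opp (f : R -> R) x a : is_derive f x a -> is_derive (fun t => - f t) x (- a).
Proof. intros. apply (is_derive_opp f x a); auto. Qed.
Lemma Rd_comp (h g : R -> R) x a b : is_derive g x a -> is_derive h (g x) b ->
  is_derive (fun t => h (g t)) x (b * a).
Proof. intros. rewrite Rmult_comm. apply (is_derive_comp h g x b a); auto. Qed.
Lemma Rd_const (c x : R) : is_derive (fun _ => c) x 0.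
Proof. apply (is_derive_const c x). Qed.

Lemma CD_eq f x l l' : CD f x l -> l = l' -> CD f x l'.
Proof. intros H ->; exact H. Qed.

Lemma CD_const (c : C) x : CD (fun _ => c) x 0%C.
Proof. apply CD_intro; apply Rd_const. Qed.

Lemma CD_RtoC (f : R -> R) x a : is_derive f x a -> CD (fun t => RtoC (f t)) x (RtoC a).
Proof. intros. apply CD_intro; simpl; auto. apply Rd_const. Qed.

Lemma CD_plus f g x a b : CD f x a -> CD g x b -> CD (fun t => (f t + g t)%C) x (a + b)%C.
Proof.
  intros Hf Hg. apply CD_intro; simpl.
  - apply Rd_plus; [apply CD_fst|apply CD_fst]; auto.
  - apply Rd_plus; [apply CD_snd|apply CD_snd]; auto.
Qed.

Lemma CD_opp f x a : CD f x a -> CD (fun t => (- f t)%C) x (- a)%C.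
Proof.
  intros Hf. apply CD_intro; simpl; apply Rd_opp; [apply CD_fst|apply CD_snd]; auto.
Qed.

Lemma CD_mult f g x a b : CD f x a -> CD g x b ->
  CD (fun t => (f t * g t)%C) x (a * g x + f x * b)%C.
Proof.
  intros Hf Hg.
  pose proof (CD_fst _ _ _ Hf); pose proof (CD_snd _ _ _ Hf);
  pose proof (CD_fst _ _ _ Hg); pose proof (CD_snd _ _ _ Hg).
  apply CD_intro; simpl.
  - eapply isd_eq. apply Rd_minus; apply Rd_mult; eauto. simpl; ring.
  - eapply isd_eq. apply Rd_plus; apply Rd_mult; eauto. simpl; ring.
Qed.

Lemma CD_inv f x a : CD f x a -> f x <> 0%C ->
  CD (fun t => (/ f t)%C) x (- a / (f x * f x))%C.
Proof.
  intros Hf Hnz.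
  pose proof (CD_fst _ _ _ Hf); pose proof (CD_snd _ _ _ Hf).
  assert (Hq : fst (f x) ^ 2 + snd (f x) ^ 2 <> 0).
  { intro E. apply Hnz. destruct (f x) as [p q] eqn:Ef. simpl in E. rewrite !Rmult_1_r in E.
    destruct (Rplus_sqr_eq_0 p q E).
    subst. reflexivity. }
  assert (Dq : is_derive (fun t => fst (f t) ^ 2 + snd (f t) ^ 2) x
      (2 * fst (f x) * fst a + 2 * snd (f x) * snd a)).
  { eapply isd_eq. apply Rd_plus.
    apply (is_derive_pow (fun t => fst (f t)) 2 x _ H).
    apply (is_derive_pow (fun t => snd (f t)) 2 x _ H0).
    simpl; ring. }
  assert (Hq2 : forall p q, p * (p * 1) + q * (q * 1) <> 0 ->
     (p * p - q * q) * ((p * p - q * q) * 1) + (p * q + q * p) * ((p * q + q * p) * 1) <> 0).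
  { intros p q Hpq E. apply Hpq.
    assert (E2 : (p*(p*1)+q*(q*1))*(p*(p*1)+q*(q*1)) = 0) by (rewrite <- E; ring).
    destruct (Rmult_integral _ _ E2); auto. }
  apply CD_intro.
  - eapply isd_eq. apply Rd_mult. exact H. apply (is_derive_inv _ _ _ Dq Hq).
    cbn beta. simpl. destruct (f x) as [p q]; destruct a as [r s]; simpl in *.
    field. repeat split; intro E; first [apply Hq; rewrite <- E; ring | apply (Hq2 p q Hq); rewrite <- E; ring].
  - eapply isd_eq. apply Rd_mult. apply Rd_opp; exact H0. apply (is_derive_inv _ _ _ Dq Hq).
    cbn beta. simpl. destruct (f x) as [p q]; destruct a as [r s]; simpl in *.
    field. repeat split; intro E; first [apply Hq; rewrite <- E; ring | apply (Hq2 p q Hq); rewrite <- E; ring].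
Qed.



Lemma CD_cexp f x a : CD f x a -> CD (fun t => cexp (f t)) x (a * cexp (f x))%C.
Proof.
  intros Hf.
  pose proof (CD_fst _ _ _ Hf) as H; pose proof (CD_snd _ _ _ Hf) as H0.
  unfold cexp.
  apply CD_intro; simpl.
  - eapply isd_eq. apply Rd_mult.
    apply (Rd_comp exp). exact H. apply is_derive_exp.
    apply (Rd_comp cos). exact H0. apply is_derive_cos.
    simpl. ring.
  - eapply isd_eq. apply Rd_mult.
    apply (Rd_comp exp). exact H. apply is_derive_exp.
    apply (Rd_comp sin). exact H0. apply is_derive_sin.
    simpl. ring.
Qed.

Lemma CD_cmul_r f x a (c : CC) : CD f x a -> CD (fun t => (f t * c)%C) x (a * c)%C.
Proof.
  intros Hf. eapply CD_eq. apply CD_mult. exact Hf. apply CD_const. cbv beta; ring.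
Qed.

Lemma CD_cmul_l f x a (c : CC) : CD f x a -> CD (fun t => (c * f t)%C) x (c * a)%C.
Proof.
  intros Hf. eapply CD_eq. apply CD_mult. apply CD_const. exact Hf. cbv beta; ring.
Qed.

Lemma CD_ccosh f x a : CD f x a -> CD (fun t => ccosh (f t)) x (a * csinh (f x))%C.
Proof.
  intros Hf. unfold ccosh, csinh, Cdiv.
  eapply CD_eq. apply CD_cmul_r. apply CD_plus. apply CD_cexp. exact Hf.
  apply CD_cexp. apply CD_opp. exact Hf. cbv beta; ring.
Qed.

Lemma CD_csinh f x a : CD f x a -> CD (fun t => csinh (f t)) x (a * ccosh (f x))%C.
Proof.
  intros Hf. unfold ccosh, csinh, Cdiv.
  eapply CD_eq. apply CD_cmul_r. apply CD_plus. apply CD_cexp. exact Hf.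
  apply CD_opp. apply CD_cexp. apply CD_opp. exact Hf. cbv beta; ring.
Qed.

Lemma cexp_neg (w : CC) : (cexp w * cexp (- w))%C = 1%C.
Proof.
  destruct w as [a b]. unfold cexp. simpl.
  rewrite cos_neg, sin_neg. apply injective_projections; simpl.
  - replace (exp a * cos b * (exp (- a) * cos b) - exp a * sin b * (exp (- a) * - sin b))
      with ((exp a * exp (- a)) * (Rsqr (sin b) + Rsqr (cos b))) by (unfold Rsqr; ring).
    rewrite sin2_cos2, <- exp_plus. replace (a + - a) with 0 by ring. rewrite exp_0. ring.
  - ring.
Qed.

Lemma cosh2_sinh2 (w : CC) : (ccosh w * ccosh w - csinh w * csinh w)%C = 1%C.
Proof.
  rewrite <- (cexp_neg w). unfold ccosh, csinh. field.
Qed.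

Lemma ccosh_nz (w : CC) : 0 < fst w -> ccosh w <> 0%C.
Proof.
  intros Ha E. unfold ccosh in E.
  assert (E2 : (cexp w + cexp (- w))%C = 0%C).
  { replace (cexp w + cexp (- w))%C with ((cexp w + cexp (- w)) / 2 * 2)%C
      by (field; intro F; injection F; lra). rewrite E. ring. }
  destruct w as [a b]. unfold cexp in E2. simpl in E2. rewrite cos_neg, sin_neg in E2.
  injection E2 as E3 E4.
  assert (Hc : cos b = 0).
  { assert (cos b * (exp a + exp (- a)) = 0) by lra.
    destruct (Rmult_integral _ _ H); auto.
    pose proof (exp_pos a); pose proof (exp_pos (- a)); lra. }
  assert (Hs : sin b * (exp a - exp (- a)) = 0) by lra.
  destruct (Rmult_integral _ _ Hs) as [Hs0|Hs0].
  - pose proof (sin2_cos2 b). rewrite Hc, Hs0 in H. unfold Rsqr in H. lra.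
  - assert (exp a = exp (- a)) by lra. apply exp_inv in H. simpl in Ha. lra.
Qed.

Lemma CD_ctanh f x a : CD f x a -> ccosh (f x) <> 0%C ->
  CD (fun t => ctanh (f t)) x (a / (ccosh (f x) * ccosh (f x)))%C.
Proof.
  intros Hf Hc. unfold ctanh, Cdiv.
  eapply CD_eq. apply CD_mult. apply CD_csinh. exact Hf.
  apply CD_inv. apply CD_ccosh. exact Hf. exact Hc.
  cbv beta. pose proof (cosh2_sinh2 (f x)) as E.
  set (c := ccosh (f x)) in *. set (s := csinh (f x)) in *.
  transitivity (a * (c * c - s * s) / (c * c))%C.
  - field. exact Hc.
  - rewrite E. field. exact Hc.
Qed.



Ltac rq := match goal with |- @eq _ ?a ?b => change (@eq R a b) end; cbv beta.

Lemma Rd_id (x : R) : is_derive (fun t : R => t) x 1.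
Proof. apply (is_derive_id x). Qed.

Lemma Rd_divc (f : R -> R) x a c : is_derive f x a -> is_derive (fun t => f t / c) x (a / c).
Proof.
  intros H. apply (is_derive_ext (fun t => f t * / c)). intros; reflexivity.
  eapply isd_eq. apply Rd_mult. exact H. apply Rd_const. rq. unfold Rdiv. ring.
Qed.

Definition Cm (L p t : R) := sqrt (L ^ 2 + (t * p) ^ 2).

Lemma csqrt_form (L a b t : R) : 0 < a * b -> 0 < t ->
  csqrt (RtoC L + Ci * RtoC (t * a * b))%C =
  (sqrt ((Cm L (a * b) t + L) / 2), sqrt ((Cm L (a * b) t - L) / 2)).
Proof.
  intros Hp Ht. unfold csqrt, Cm, Cmod.
  assert (E1 : fst (RtoC L + Ci * RtoC (t * a * b))%C = L) by (simpl; ring).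
  assert (E2 : snd (RtoC L + Ci * RtoC (t * a * b))%C = t * (a * b)) by (simpl; ring).
  assert (E3 : Re (RtoC L + Ci * RtoC (t * a * b))%C = L) by (unfold Re; simpl; ring).
  assert (E4 : Im (RtoC L + Ci * RtoC (t * a * b))%C = t * (a * b)) by (unfold Im; simpl; ring).
  rewrite E1, E2, E3, E4.
  destruct (Rlt_dec (t * (a * b)) 0) as [H|H].
  - exfalso. pose proof (Rmult_lt_0_compat _ _ Ht Hp). lra.
  - reflexivity.
Qed.

Lemma locally_pos (t0 : R) : 0 < t0 -> locally t0 (fun t => 0 < t).
Proof.
  intros H. exists (mkposreal t0 H). intros t Ht.
  unfold ball in Ht; simpl in Ht. unfold AbsRing_ball, abs, minus, plus, opp in Ht; simpl in Ht.
  destruct (Rabs_def2 _ _ Ht). lra.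
Qed.

Lemma CD_u (L a b t0 : R) : 0 < a * b -> 0 < t0 ->
  CD (fun t => csqrt (RtoC L + Ci * RtoC (t * a * b))%C) t0
     (Ci * RtoC (a * b) / (2 * csqrt (RtoC L + Ci * RtoC (t0 * a * b))))%C.
Proof.
  intros Hp Ht.
  rewrite (csqrt_form L a b t0 Hp Ht).
  apply (is_derive_ext_loc (fun t => (sqrt((Cm L (a*b) t + L)/2), sqrt((Cm L (a*b) t - L)/2)))).
  { eapply filter_imp; [|apply locally_pos; exact Ht]. intros t Htp. symmetry. apply csqrt_form; auto. }
  set (p := a * b) in *.
  set (C := Cm L p t0).
  assert (Hs : 0 < t0 * p) by (apply Rmult_lt_0_compat; auto).
  assert (HC : Rabs L < C).
  { unfold C, Cm. rewrite <- sqrt_Rsqr_abs. apply sqrt_lt_1_alt. split.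
    apply Rle_0_sqr. unfold Rsqr. simpl. nra. }
  assert (HL : - Rabs L <= L <= Rabs L) by (split; [pose proof (Rabs_maj2 L); lra | apply Rle_abs]).
  assert (HgC : 0 < L ^ 2 + (t0 * p) ^ 2) by (simpl; nra).
  assert (DC : is_derive (Cm L p) t0 (2 * (t0 * p) * p / (2 * C))).
  { unfold C, Cm. apply (is_derive_sqrt (fun t => L^2 + (t*p)^2) t0 (2 * (t0 * p) * p)); auto.
    eapply isd_eq. apply Rd_plus. apply Rd_const.
    apply (is_derive_pow (fun t => t * p) 2 t0 p).
    eapply isd_eq. apply Rd_mult. apply Rd_id. apply Rd_const. rq; ring.
    rq; simpl; ring. }
  assert (HCL1 : 0 < (C + L) / 2) by lra.
  assert (HCL2 : 0 < (C - L) / 2) by lra.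
  assert (DX : is_derive (fun t => (Cm L p t + L)/2) t0 ((2 * (t0 * p) * p / (2 * C))/2)).
  { apply Rd_divc. eapply isd_eq. apply Rd_plus. exact DC. apply Rd_const. rq; ring. }
  assert (DY : is_derive (fun t => (Cm L p t - L)/2) t0 ((2 * (t0 * p) * p / (2 * C))/2)).
  { apply Rd_divc. eapply isd_eq. apply Rd_minus. exact DC. apply Rd_const. rq; ring. }
  assert (HC0 : 0 <= C) by (unfold C, Cm; apply sqrt_pos).
  assert (HC2 : C * C = L ^ 2 + (t0 * p) ^ 2) by (unfold C, Cm; apply sqrt_sqrt; lra).
  assert (HX2 : sqrt ((C + L) / 2) * sqrt ((C + L) / 2) = (C + L) / 2) by (apply sqrt_sqrt; lra).
  assert (HY2 : sqrt ((C - L) / 2) * sqrt ((C - L) / 2) = (C - L) / 2) by (apply sqrt_sqrt; lra).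
  assert (HX : 0 < sqrt ((C + L) / 2)) by (apply sqrt_lt_R0; lra).
  assert (HY : 0 < sqrt ((C - L) / 2)) by (apply sqrt_lt_R0; lra).
  assert (HXY : sqrt ((C + L) / 2) * sqrt ((C - L) / 2) = t0 * p / 2).
  { rewrite <- sqrt_mult_alt by lra.
    replace ((C + L) / 2 * ((C - L) / 2)) with ((t0 * p / 2) ^ 2).
    apply sqrt_pow2. lra.
    replace ((C + L) / 2 * ((C - L) / 2)) with ((C * C - L ^ 2) / 4) by field.
    rewrite HC2. field. }
  apply CD_intro; simpl fst; simpl snd.
  - eapply isd_eq. apply (is_derive_sqrt _ _ _ DX HCL1).
    fold C. set (X := sqrt ((C + L) / 2)) in *. set (Y := sqrt ((C - L) / 2)) in *.
    clearbody X Y.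
    assert (HCe : C = X * X + Y * Y) by lra.
    assert (Hse : t0 * p = 2 * X * Y) by lra.
    simpl. rewrite Hse, HCe. field. split; [lra|]. nra.
  - eapply isd_eq. apply (is_derive_sqrt _ _ _ DY HCL2).
    fold C. set (X := sqrt ((C + L) / 2)) in *. set (Y := sqrt ((C - L) / 2)) in *.
    clearbody X Y.
    assert (HCe : C = X * X + Y * Y) by lra.
    assert (Hse : t0 * p = 2 * X * Y) by lra.
    simpl. rewrite Hse, HCe. field. split; [lra|]. nra.
Qed.



Lemma upd_same sigma j : upd sigma j (sigma j) = sigma.
Proof.
  apply functional_extensionality. intros i. unfold upd.
  destruct (Nat.eqb_spec i j); subst; reflexivity.
Qed.

Lemma upd_eq sigma j t : upd sigma j t j = t.
Proof. unfold upd. rewrite Nat.eqb_refl. reflexivity. Qed.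

Lemma upd_ne sigma j t k : k <> j -> upd sigma j t k = sigma k.
Proof. intros H. unfold upd. apply Nat.eqb_neq in H. rewrite H. reflexivity. Qed.

Lemma u_upd_ne lam omega mu sigma j t k : k <> j ->
  u_ lam omega mu (upd sigma j t) k = u_ lam omega mu sigma k.
Proof. intros H. unfold u_. rewrite upd_ne; auto. Qed.

Lemma N_upd_ne lam omega mu sigma j t k : k <> j ->
  N_ lam omega mu (upd sigma j t) k = N_ lam omega mu sigma k.
Proof. intros H. unfold N_. rewrite u_upd_ne; auto. Qed.

Lemma Ystep_upd_ne lam omega d mu sigma j t k Y : k <> j ->
  Ystep lam omega d mu (upd sigma j t) k Y = Ystep lam omega d mu sigma k Y.
Proof. intros H. unfold Ystep. rewrite N_upd_ne, u_upd_ne; auto. Qed.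

Lemma Yr_upd_const lam omega n d mu sigma j t i : (j < n - i)%nat ->
  Yr lam omega n d mu (upd sigma j t) i = Yr lam omega n d mu sigma i.
Proof.
  induction i as [|i IH]; intros H; simpl.
  - apply N_upd_ne. lia.
  - rewrite IH by lia. apply Ystep_upd_ne. lia.
Qed.

Lemma u_form lam omega mu sigma k :
  u_ lam omega mu sigma k = csqrt (RtoC (lam ^ 2) + Ci * RtoC (sigma k * mu k * omega))%C.
Proof. reflexivity. Qed.

Lemma u_re_pos L a b t : 0 < a * b -> 0 < t ->
  0 < fst (csqrt (RtoC L + Ci * RtoC (t * a * b))%C).
Proof.
  intros Hp Ht. rewrite csqrt_form by auto. simpl.
  apply sqrt_lt_R0.
  assert (Hs : 0 < t * (a * b)) by (apply Rmult_lt_0_compat; auto).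
  assert (HC : Rabs L < Cm L (a * b) t).
  { unfold Cm. rewrite <- sqrt_Rsqr_abs. apply sqrt_lt_1_alt. split.
    apply Rle_0_sqr. unfold Rsqr. simpl. nra. }
  assert (- Rabs L <= L) by (pose proof (Rabs_maj2 L); lra).
  lra.
Qed.



Lemma C1_nz : RtoC 1 <> RtoC 0.
Proof. intro E. assert (E2 : fst (RtoC 1) = fst (RtoC 0)) by (f_equal; exact E). simpl in E2. lra. Qed.

Lemma RtoC_nz (r : R) : r <> 0 -> RtoC r <> RtoC 0.
Proof. intros H E. apply H. assert (E2 : fst (RtoC r) = fst (RtoC 0)) by (rewrite E; reflexivity). exact E2. Qed.

Lemma Ci_nz : Ci <> RtoC 0.
Proof. intros E. assert (E2 : snd Ci = snd (RtoC 0)) by (rewrite E; reflexivity). simpl in E2. lra. Qed.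

Lemma Cinv_nz (x : CC) : x <> 0%C -> (/ x)%C <> 0%C.
Proof.
  intros Hx E. apply C1_nz. rewrite <- (Cinv_r x Hx). rewrite E. ring.
Qed.

Lemma Cmult_nz (x y : CC) : x <> 0%C -> y <> 0%C -> (x * y)%C <> 0%C.
Proof.
  intros Hx Hy E. apply Hy. transitivity (/ x * (x * y))%C.
  field. exact Hx. rewrite E. ring.
Qed.

Lemma tanh_rel (z : CC) : ccosh z <> 0%C ->
  (ccosh z * ccosh z)%C = (/ (1 - ctanh z * ctanh z))%C /\ (1 - ctanh z * ctanh z)%C <> 0%C.
Proof.
  intros Hc. pose proof (cosh2_sinh2 z) as E. unfold ctanh.
  assert (E2 : (1 - csinh z / ccosh z * (csinh z / ccosh z))%C = (/ (ccosh z * ccosh z))%C).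
  { set (c := ccosh z) in *. set (s := csinh z) in *.
    transitivity ((c * c - s * s) / (c * c))%C. field. exact Hc.
    rewrite E. field. exact Hc. }
  rewrite E2. split.
  - field. exact Hc.
  - apply Cinv_nz. apply Cmult_nz; exact Hc.
Qed.

Lemma Ci_m_nz (m : R) : 0 < m -> (Ci * RtoC m)%C <> 0%C.
Proof.
  intros Hm E. injection E as E1 E2. lra.
Qed.

Lemma D_self (L a b d Y1 t0 : R) (Y1c : CC) :
  0 < a * b -> 0 < t0 -> 0 < d ->
  let U0 := csqrt (RtoC L + Ci * RtoC (t0 * a * b))%C in
  let N0 := (U0 / (Ci * RtoC (a * b)))%C in
  let z := (RtoC d * U0)%C in
  (N0 + Y1c * ctanh z)%C <> 0%C ->
  CD (fun t =>
        let U := csqrt (RtoC L + Ci * RtoC (t * a * b))%C in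
        let Nt := (U / (Ci * RtoC (a * b)))%C in
        let T := ctanh (RtoC d * U)%C in
        (Nt * ((Y1c + Nt * T) / (Nt + Y1c * T)))%C) t0
     ((Y1c + N0 * ctanh z) / (N0 + Y1c * ctanh z) / (2 * U0)
      + / ((N0 + Y1c * ctanh z) ^ 2 * ccosh z ^ 2) / 2 *
        (N0 ^ 2 * RtoC d - Y1c * (RtoC d * Y1c + / (Ci * RtoC (a * b)))))%C.
Proof.
  intros Hab Ht Hd U0 N0 z HD.
  assert (HU : CD (fun t => csqrt (RtoC L + Ci * RtoC (t * a * b))%C) t0
                  (Ci * RtoC (a * b) / (2 * U0))%C) by (apply CD_u; auto).
  assert (HU0 : 0 < fst U0) by (apply u_re_pos; auto).
  assert (HU0' : U0 <> 0%C) by (intro E; rewrite E in HU0; simpl in HU0; lra).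
  assert (Hm := Ci_m_nz _ Hab).
  assert (Hcz : ccosh z <> 0%C).
  { apply ccosh_nz. unfold z. simpl. nra. }
  destruct (tanh_rel z Hcz) as [Hcc HT1].
  assert (HN : CD (fun t => (csqrt (RtoC L + Ci * RtoC (t * a * b)) / (Ci * RtoC (a * b)))%C) t0
                  (Ci * RtoC (a * b) / (2 * U0) * / (Ci * RtoC (a * b)))%C)
    by (apply CD_cmul_r; exact HU).
  assert (HT : CD (fun t => ctanh (RtoC d * csqrt (RtoC L + Ci * RtoC (t * a * b))))%C t0
                  (RtoC d * (Ci * RtoC (a * b) / (2 * U0)) / (ccosh z * ccosh z))%C).
  { apply CD_ctanh. apply CD_cmul_l. exact HU. exact Hcz. }
  eapply CD_eq.
  { apply CD_mult. exact HN. apply CD_mult. apply CD_plus. apply CD_const.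
    apply CD_mult. exact HN. exact HT.
    apply CD_inv. apply CD_plus. exact HN. apply CD_mult. apply CD_const. exact HT.
    exact HD. }
  cbv beta. fold U0. fold N0. fold z.
  replace (ccosh z ^ 2)%C with (ccosh z * ccosh z)%C by ring.
  rewrite Hcc. unfold N0.
  field. repeat split.
  - apply RtoC_nz. lra.
  - exact Ci_nz.
  - exact HT1.
  - intro E. apply HD. unfold N0.
    transitivity ((U0 + Y1c * ctanh z * (Ci * RtoC (a * b))) / (Ci * RtoC (a * b)))%C.
    field. split; [apply RtoC_nz; lra | exact Ci_nz]. rewrite E. field. split; [apply RtoC_nz; lra | exact Ci_nz].
  - exact HU0'.
Qed.

Lemma D_other (N z : CC) (Y : R -> CC) t0 Y' :
  CD Y t0 Y' -> ccosh z <> 0%C -> (N + Y t0 * ctanh z)%C <> 0%C ->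
  CD (fun t => (N * ((Y t + N * ctanh z) / (N + Y t * ctanh z)))%C) t0
     (N ^ 2 * / ((N + Y t0 * ctanh z) ^ 2 * ccosh z ^ 2) * Y')%C.
Proof.
  intros HY Hcz HD.
  destruct (tanh_rel z Hcz) as [Hcc HT1].
  eapply CD_eq.
  { apply CD_mult. apply CD_const. apply CD_mult. apply CD_plus. exact HY. apply CD_const.
    apply CD_inv. apply CD_plus. apply CD_const. apply CD_mult. exact HY. apply CD_const.
    exact HD. }
  cbv beta.
  replace (ccosh z ^ 2)%C with (ccosh z * ccosh z)%C by ring.
  rewrite Hcc. field. split; [exact HT1 | exact HD].
Qed.

Lemma D_N (L a b t0 : R) : 0 < a * b -> 0 < t0 ->
  CD (fun t => (csqrt (RtoC L + Ci * RtoC (t * a * b)) / (Ci * RtoC (a * b)))%C) t0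
     (/ (2 * csqrt (RtoC L + Ci * RtoC (t0 * a * b))))%C.
Proof.
  intros Hab Ht.
  assert (HU0 : 0 < fst (csqrt (RtoC L + Ci * RtoC (t0 * a * b)))) by (apply u_re_pos; auto).
  assert (HU0' : csqrt (RtoC L + Ci * RtoC (t0 * a * b)) <> 0%C)
    by (intro E; rewrite E in HU0; simpl in HU0; lra).
  eapply CD_eq. apply CD_cmul_r. apply CD_u; auto.
  field. repeat split; auto. apply RtoC_nz; lra. exact Ci_nz.
Qed.



Lemma CD_ext f g x l : (forall t, f t = g t) -> CD f x l -> CD g x l.
Proof. intros H Hf. unfold CD in *. apply (is_derive_ext f g x l H Hf). Qed.

Definition Ykk lam omega n d mu sigma k : CC :=
  let Nk := N_ lam omega mu sigma k in
  let uk := u_ lam omega mu sigma k in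
  let ak := a_ lam omega n d mu sigma k in
  let bk := b_ lam omega n d mu sigma k in
  let Y1 := Y_ lam omega n d mu sigma (S k) in
  (ak / (2 * uk) + bk / 2 * (Nk ^ 2 * RtoC (d k)
        - Y1 * (RtoC (d k) * Y1 + / (Ci * RtoC (mu k * omega)))))%C.

Fixpoint Ypr lam omega n d mu sigma i j : CC :=
  match i with
  | O => if Nat.eqb j n then (/ (2 * u_ lam omega mu sigma n))%C else RtoC 0
  | S i' =>
    if Nat.eqb j (n - S i') then Ykk lam omega n d mu sigma (n - S i')
    else if Nat.ltb (n - S i') j then
      (N_ lam omega mu sigma (n - S i') ^ 2 * b_ lam omega n d mu sigma (n - S i')
        * Ypr lam omega n d mu sigma i' j)%C
    else RtoC 0
  end.

Lemma Ypr_deriv (lam omega : R) (n : nat) (d mu sigma : nat -> R)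
  (Homega : 0 < omega) (Hn : (1 <= n)%nat)
  (Hd : forall k, (1 <= k <= n - 1)%nat -> 0 < d k)
  (Hmu : forall k, (1 <= k <= n)%nat -> 0 < mu k)
  (Hsigma : forall k, (1 <= k <= n)%nat -> 0 < sigma k)
  (Hden : forall k, (1 <= k <= n - 1)%nat ->
     (N_ lam omega mu sigma k
      + Y_ lam omega n d mu sigma (S k)
        * ctanh (RtoC (d k) * u_ lam omega mu sigma k))%C <> 0%C) :
  forall i, (i <= n - 1)%nat -> forall j, (1 <= j <= n)%nat ->
  CD (fun t => Yr lam omega n d mu (upd sigma j t) i) (sigma j)
     (Ypr lam omega n d mu sigma i j).
Proof.
  induction i as [|i IH]; intros Hi j Hj.
  - cbn [Ypr]. destruct (Nat.eqb_spec j n) as [E|E].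
    + subst j.
      apply (CD_ext (fun t => (csqrt (RtoC (lam ^ 2) + Ci * RtoC (t * mu n * omega))
                                / (Ci * RtoC (mu n * omega)))%C)).
      { intros t. simpl. unfold N_, u_. rewrite upd_eq. reflexivity. }
      apply D_N; first [apply Hsigma; lia | apply Rmult_lt_0_compat; [apply Hmu; lia|exact Homega]].
    + apply (CD_ext (fun _ => N_ lam omega mu sigma n)).
      { intros t. simpl. rewrite N_upd_ne; auto. }
      apply CD_const.
  - set (k := (n - S i)%nat).
    assert (Hk1 : (1 <= k <= n - 1)%nat) by (unfold k; lia).
    assert (Hki : (n - S k)%nat = i) by (unfold k; lia).
    assert (Hab : 0 < mu k * omega) by (apply Rmult_lt_0_compat; [apply Hmu; lia|exact Homega]).
    assert (Hsk : 0 < sigma k) by (apply Hsigma; lia).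
    assert (Hdk : 0 < d k) by (apply Hd; lia).
    assert (HDk := Hden k Hk1). unfold Y_ in HDk. rewrite Hki in HDk.
    assert (Hcz : ccosh (RtoC (d k) * u_ lam omega mu sigma k) <> 0%C).
    { apply ccosh_nz. pose proof (u_re_pos (lam ^ 2) (mu k) omega (sigma k) Hab Hsk) as Hu.
      simpl. change (u_ lam omega mu sigma k) with
        (csqrt (RtoC (lam ^ 2) + Ci * RtoC (sigma k * mu k * omega))%C). nra. }
    cbn [Ypr]. fold k.
    destruct (Nat.eqb_spec j k) as [E|E].
    + subst j.
      apply (CD_ext (fun t =>
        let U := csqrt (RtoC (lam ^ 2) + Ci * RtoC (t * mu k * omega))%C in
        let Nt := (U / (Ci * RtoC (mu k * omega)))%C in
        let T := ctanh (RtoC (d k) * U)%C in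
        (Nt * ((Yr lam omega n d mu sigma i + Nt * T) / (Nt + Yr lam omega n d mu sigma i * T)))%C)).
      { intros t. cbn [Yr]. fold k. rewrite Yr_upd_const by (unfold k; lia).
        unfold Ystep, N_, u_. rewrite upd_eq. reflexivity. }
      eapply CD_eq. apply (D_self (lam ^ 2) (mu k) omega (d k) 0 (sigma k)); auto.
      unfold Ykk, a_, b_, Y_. rewrite Hki. reflexivity.
    + destruct (Nat.ltb_spec k j) as [E2|E2].
      * apply (CD_ext (fun t => (N_ lam omega mu sigma k *
            ((Yr lam omega n d mu (upd sigma j t) i + N_ lam omega mu sigma k * ctanh (RtoC (d k) * u_ lam omega mu sigma k))
             / (N_ lam omega mu sigma k + Yr lam omega n d mu (upd sigma j t) i * ctanh (RtoC (d k) * u_ lam omega mu sigma k))))%C)).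
        { intros t. cbn [Yr]. fold k. rewrite Ystep_upd_ne by auto. reflexivity. }
        eapply CD_eq. apply D_other. apply IH. lia. exact Hj. exact Hcz.
        cbv beta. rewrite upd_same. exact HDk.
        cbv beta. rewrite upd_same. unfold b_, Y_. rewrite Hki. reflexivity.
      * apply (CD_ext (fun _ => Yr lam omega n d mu sigma (S i))).
        { intros t. rewrite Yr_upd_const; auto. unfold k in *. lia. }
        apply CD_const.
Qed.

Theorem lemma1 (lam omega : R) (n : nat) (d mu sigma : nat -> R)
  (Hlam : 0 <= lam) (Homega : 0 < omega) (Hn : (1 <= n)%nat)
  (Hd : forall k, (1 <= k <= n - 1)%nat -> 0 < d k)
  (Hmu : forall k, (1 <= k <= n)%nat -> 0 < mu k)
  (Hsigma : forall k, (1 <= k <= n)%nat -> 0 < sigma k)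
  (Hden : forall k, (1 <= k <= n - 1)%nat ->
     (N_ lam omega mu sigma k
      + Y_ lam omega n d mu sigma (S k)
        * ctanh (RtoC (d k) * u_ lam omega mu sigma k))%C <> 0%C) :
  exists Yp : nat -> nat -> CC,
    (forall k j, (1 <= k <= n)%nat -> (1 <= j <= n)%nat ->
       is_derive (V := C_R_NormedModule)
         (fun t => Y_ lam omega n d mu (upd sigma j t) k) (sigma j) (Yp k j)) /\
    Yp n n = (/ (2 * u_ lam omega mu sigma n))%C /\
    (forall j, (1 <= j <= n - 1)%nat -> Yp n j = 0%C) /\
    (forall k, (1 <= k <= n - 1)%nat ->
       let Nk := N_ lam omega mu sigma k in
       let uk := u_ lam omega mu sigma k in
       let ak := a_ lam omega n d mu sigma k in
       let bk := b_ lam omega n d mu sigma k in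
       let Y1 := Y_ lam omega n d mu sigma (S k) in
       (forall j, (k + 1 <= j <= n)%nat -> Yp k j = (Nk ^ 2 * bk * Yp (S k) j)%C) /\
       Yp k k = (ak / (2 * uk)
                 + bk / 2 * (Nk ^ 2 * RtoC (d k)
                             - Y1 * (RtoC (d k) * Y1 + / (Ci * RtoC (mu k * omega)))))%C /\
       (forall j, (1 <= j <= k - 1)%nat -> Yp k j = 0%C)).
Proof.
  pose proof (Ypr_deriv lam omega n d mu sigma Homega Hn Hd Hmu Hsigma Hden) as HD.
  exists (fun k j => Ypr lam omega n d mu sigma (n - k) j).
  split; [|split; [|split]].
  - intros k j Hk Hj. apply (HD (n - k)%nat); [lia | exact Hj].
  - rewrite Nat.sub_diag. cbn [Ypr]. rewrite Nat.eqb_refl. reflexivity.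
  - intros j Hj. rewrite Nat.sub_diag. cbn [Ypr].
    destruct (Nat.eqb_spec j n); [lia | reflexivity].
  - intros k Hk Nk uk ak bk Y1.
    assert (E : (n - k)%nat = S (n - S k)) by lia.
    assert (E2 : (n - S (n - S k))%nat = k) by lia.
    rewrite E. cbn [Ypr]. rewrite E2.
    split; [|split].
    + intros j Hj. destruct (Nat.eqb_spec j k); [lia|].
      destruct (Nat.ltb_spec k j); [|lia]. reflexivity.
    + rewrite Nat.eqb_refl. reflexivity.
    + intros j Hj. destruct (Nat.eqb_spec j k); [lia|].
      destruct (Nat.ltb_spec k j); [lia|]. reflexivity.
Qed.
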